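(* Let $\Omega\subset\mathbb{R}^N$ be a bounded smooth domain, $\gamma\ge0$, $q\in(0,\gamma+1)$, $a\in C(\overline\Omega)$, and let $F$ satisfy (F1) and (F2). Let $u$ be a nontrivial viscosity solution of $(\mathrm{P}_{a,q})$. Then there exists a nonempty open subdomain $\Omega'\subset\Omega^+=\{x\in\Omega:a(x)>0\}$ such that $u>0$ in $\Omega'$.
   Context: $\mathrm{Sym}(N)$ is the space of real symmetric $N\times N$ matrices. For $0<\lambda\le\Lambda$ the Pucci extremal operators are $\mathcal{M}^{+}_{\lambda,\Lambda}(X)=\Lambda\sum_{e_i>0}e_i(X)+\lambda\sum_{e_i<0}e_i(X)$ and $\mathcal{M}^{-}_{\lambda,\Lambda}(X)=\lambda\sum_{e_i>0}e_i(X)+\Lambda\sum_{e_i<0}e_i(X)$. (F1) There are constants $\Lambda\ge\lambda>0$ with $\mathcal{M}^-_{\lambda,\Lambda}(Y)\le F(x,X+Y)-F(x,X)\le\mathcal{M}^+_{\lambda,\Lambda}(Y)$ for all $x\in\Omega$, $X,Y\in\mathrm{Sym}(N)$, $Y\ge0$. (F2) $F(x,sX)=sF(x,X)$ for all $s>0$. Viscosity solutions: for continuous $G(x,r,p,X)$, $u\in C(\Omega)$ is a viscosity supersolution (resp. subsolution) of $G(x,u,Du,D^2u)=0$ if whenever $\phi\in C^2(\Omega)$ and $u-\phi$ has a local minimum (resp. maximum) at $x_0$, then $G(x_0,u(x_0),D\phi(x_0),D^2\phi(x_0))\le0$ (resp. $\ge0$); a solution is both. Problem $(\mathrm{P}_{a,q})$: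 find $u\in C(\overline{\Omega})$, $u\ge0$ in $\Omega$, $u=0$ on $\partial\Omega$, viscosity solution of $|Du|^\gamma F(x,D^2u)+a(x)u^q=0$ in $\Omega$. Nontrivial means $u\not\equiv0$. *)

(* Defs.v *)
From mathcomp Require Import ssreflect ssrfun ssrbool eqtype ssrnat seq fintype bigop.
From Stdlib Require Import Reals ClassicalEpsilon.
Set Implicit Arguments.
Unset Strict Implicit.
Open Scope R_scope.

Definition Vec (N : nat) := 'I_N -> R.
Definition Mat (N : nat) := 'I_N -> 'I_N -> R.

Definition sumI {N : nat} (f : 'I_N -> R) : R := \big[Rplus/0]_(i < N) f i.

Definition vadd {N} (x y : Vec N) : Vec N := fun i => x i + y i.
Definition vsub {N} (x y : Vec N) : Vec N := fun i => x i - y i.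
Definition vscale {N} (t : R) (x : Vec N) : Vec N := fun i => t * x i.
Definition evec {N} (i : 'I_N) : Vec N := fun j => if j == i then 1 else 0.
Definition dot {N} (x y : Vec N) : R := sumI (fun i => x i * y i).
Definition vnorm {N} (x : Vec N) : R := sqrt (dot x x).
Definition dist {N} (x y : Vec N) : R := vnorm (vsub x y).

Definition msub {N} (X Y : Mat N) : Mat N := fun i j => X i j - Y i j.
Definition madd {N} (X Y : Mat N) : Mat N := fun i j => X i j + Y i j.
Definition mscale {N} (s : R) (X : Mat N) : Mat N := fun i j => s * X i j.
Definition mnorm {N} (X : Mat N) : R := sqrt (sumI (fun i => sumI (fun j => X i j * X i j))).
Definition matvec {N} (X : Mat N) (v : Vec N) : Vec N := fun i => sumI (fun j => X i j * v j).

Definition Sym {N} (X : Mat N) : Prop := forall i j, X i j = X j i.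
Definition psd {N} (Y : Mat N) : Prop := forall v : Vec N, 0 <= dot v (matvec Y v).

(* e : 'I_N -> R is a list of the eigenvalues of X (with multiplicity):
   there is an orthonormal basis of eigenvectors v_k with X v_k = e_k v_k. *)
Definition eigvals_of {N} (X : Mat N) (e : 'I_N -> R) : Prop :=
  exists v : 'I_N -> Vec N,
    (forall k l, dot (v k) (v l) = if k == l then 1 else 0) /\
    (forall k i, matvec X (v k) i = e k * v k i).

(* e_i(X): the eigenvalues of X (a choice; for X in Sym(N) they exist by the
   spectral theorem and the Pucci values below do not depend on the choice). *)
Definition eig {N} (X : Mat N) : 'I_N -> R :=
  epsilon (inhabits (fun _ => 0)) (eigvals_of X).

Definition Pucci_plus {N} (lam Lam : R) (X : Mat N) : R :=
  Lam * sumI (fun i => Rmax (eig X i) 0) + lam * sumI (fun i => Rmin (eig X i) 0).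
Definition Pucci_minus {N} (lam Lam : R) (X : Mat N) : R :=
  lam * sumI (fun i => Rmax (eig X i) 0) + Lam * sumI (fun i => Rmin (eig X i) 0).

Definition open_set {N} (U : Vec N -> Prop) : Prop :=
  forall x, U x -> exists r, 0 < r /\ forall y, dist y x < r -> U y.
Definition connected_set {N} (U : Vec N -> Prop) : Prop :=
  forall A B : Vec N -> Prop, open_set A -> open_set B ->
    (forall x, U x -> A x \/ B x) ->
    (forall x, U x -> A x -> B x -> False) ->
    (exists x, U x /\ A x) -> (exists x, U x /\ B x) -> False.
Definition domain {N} (U : Vec N -> Prop) : Prop :=
  open_set U /\ connected_set U /\ exists x, U x.
Definition bounded {N} (U : Vec N -> Prop) : Prop :=
  exists M, forall x, U x -> vnorm x <= M.
Definition closure {N} (U : Vec N -> Prop) : Vec N -> Prop :=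
  fun x => forall eps, 0 < eps -> exists y, U y /\ dist y x < eps.
Definition boundary {N} (U : Vec N -> Prop) : Vec N -> Prop :=
  fun x => closure U x /\ ~ U x.
Definition ball {N} (x : Vec N) (r : R) : Vec N -> Prop := fun y => dist y x < r.

Definition cont_on {N} (U : Vec N -> Prop) (f : Vec N -> R) : Prop :=
  forall x, U x -> forall eps, 0 < eps -> exists del, 0 < del /\
    forall y, U y -> dist y x < del -> Rabs (f y - f x) < eps.

Definition partial_at {N} (f : Vec N -> R) (i : 'I_N) (x : Vec N) (l : R) : Prop :=
  derivable_pt_lim (fun t => f (vadd x (vscale t (evec i)))) 0 l.

Fixpoint Ck {N} (k : nat) (U : Vec N -> Prop) (f : Vec N -> R) : Prop :=
  match k with
  | O => cont_on U f
  | S k' => cont_on U f /\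
      exists df : 'I_N -> Vec N -> R,
        (forall i x, U x -> partial_at f i x (df i x)) /\ (forall i, Ck k' U (df i))
  end.
Definition Cinf {N} (U : Vec N -> Prop) (f : Vec N -> R) : Prop := forall k, Ck k U f.

Definition C2_with {N} (U : Vec N -> Prop) (phi : Vec N -> R)
    (Dphi : Vec N -> Vec N) (D2phi : Vec N -> Mat N) : Prop :=
  cont_on U phi /\
  (forall i x, U x -> partial_at phi i x (Dphi x i)) /\
  (forall i, cont_on U (fun x => Dphi x i)) /\
  (forall i j x, U x -> partial_at (fun y => Dphi y i) j x (D2phi x i j)) /\
  (forall i j, cont_on U (fun x => D2phi x i j)).

(* bounded smooth domain: C^infinity boundary, given locally by a defining
   function with nonvanishing gradient *)
Definition smooth_boundary {N} (U : Vec N -> Prop) : Prop :=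
  forall x0, boundary U x0 ->
    exists r (rho : Vec N -> R) (Drho : 'I_N -> Vec N -> R),
      0 < r /\ Cinf (ball x0 r) rho /\
      (forall i y, ball x0 r y -> partial_at rho i y (Drho i y)) /\
      (exists i, Drho i x0 <> 0) /\
      (forall y, ball x0 r y -> (U y <-> rho y < 0)).

Definition bounded_smooth_domain {N} (U : Vec N -> Prop) : Prop :=
  domain U /\ bounded U /\ smooth_boundary U.

Definition local_min_on {N} (U : Vec N -> Prop) (f : Vec N -> R) (x0 : Vec N) : Prop :=
  exists r, 0 < r /\ forall y, U y -> dist y x0 < r -> f x0 <= f y.
Definition local_max_on {N} (U : Vec N -> Prop) (f : Vec N -> R) (x0 : Vec N) : Prop :=
  exists r, 0 < r /\ forall y, U y -> dist y x0 < r -> f y <= f x0.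

Definition visc_super {N} (U : Vec N -> Prop) (G : Vec N -> R -> Vec N -> Mat N -> R)
    (u : Vec N -> R) : Prop :=
  cont_on U u /\
  forall phi Dphi D2phi x0, C2_with U phi Dphi D2phi -> U x0 ->
    local_min_on U (fun x => u x - phi x) x0 ->
    G x0 (u x0) (Dphi x0) (D2phi x0) <= 0.
Definition visc_sub {N} (U : Vec N -> Prop) (G : Vec N -> R -> Vec N -> Mat N -> R)
    (u : Vec N -> R) : Prop :=
  cont_on U u /\
  forall phi Dphi D2phi x0, C2_with U phi Dphi D2phi -> U x0 ->
    local_max_on U (fun x => u x - phi x) x0 ->
    0 <= G x0 (u x0) (Dphi x0) (D2phi x0).
Definition visc_sol {N} U G (u : Vec N -> R) : Prop := visc_super U G u /\ visc_sub U G u.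

(* powers: t^g for t >= 0, g >= 0, with 0^0 = 1 and 0^g = 0 for g > 0 *)
Definition rpow (t g : R) : R :=
  if Rlt_dec 0 t then Rpower t g else if Req_EM_T g 0 then 1 else 0.

Definition G_aq {N} (F : Vec N -> Mat N -> R) (a : Vec N -> R) (gamma q : R)
    (x : Vec N) (r : R) (p : Vec N) (X : Mat N) : R :=
  rpow (vnorm p) gamma * F x X + a x * rpow r q.

Definition solves_P {N} (Om : Vec N -> Prop) (F : Vec N -> Mat N -> R)
    (a : Vec N -> R) (gamma q : R) (u : Vec N -> R) : Prop :=
  cont_on (closure Om) u /\
  (forall x, Om x -> 0 <= u x) /\
  (forall x, boundary Om x -> u x = 0) /\
  visc_sol Om (G_aq F a gamma q) u.

Definition F1 {N} (Om : Vec N -> Prop) (F : Vec N -> Mat N -> R) (lam Lam : R) : Prop :=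
  0 < lam /\ lam <= Lam /\
  forall x X Y, Om x -> Sym X -> Sym Y -> psd Y ->
    Pucci_minus lam Lam Y <= F x (madd X Y) - F x X <= Pucci_plus lam Lam Y.
Definition F2 {N} (Om : Vec N -> Prop) (F : Vec N -> Mat N -> R) : Prop :=
  forall x X s, Om x -> Sym X -> 0 < s -> F x (mscale s X) = s * F x X.
(* continuity of F on Omega x Sym(N) (standing assumption of the viscosity framework) *)
Definition F_cont {N} (Om : Vec N -> Prop) (F : Vec N -> Mat N -> R) : Prop :=
  forall x X, Om x -> Sym X -> forall eps, 0 < eps -> exists del, 0 < del /\
    forall y Y, Om y -> Sym Y -> dist y x < del -> mnorm (msub Y X) < del ->
      Rabs (F y Y - F x X) < eps.

(* Main.v *)
Require Import Defs.
From mathcomp Require Import ssreflect ssrfun ssrbool eqtype ssrnat seq fintype bigop.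
From Stdlib Require Import Reals ClassicalEpsilon.
From HB Require Import structures.
From Stdlib Require Import Lra Lia FunctionalExtensionality Classical.
Open Scope R_scope.
Set Implicit Arguments.
Unset Strict Implicit.


HB.instance Definition _ := Monoid.isComLaw.Build R 0 Rplus (fun a b c => esym (Rplus_assoc a b c)) Rplus_comm Rplus_0_l.

Lemma sumI_add N (f g : 'I_N -> R) : sumI (fun i => f i + g i) = sumI f + sumI g.
Proof. by rewrite /sumI big_split. Qed.

Lemma sumI_scal N c (f : 'I_N -> R) : sumI (fun i => c * f i) = c * sumI f.
Proof.
rewrite /sumI; apply: (big_rec2 (fun x y => x = c * y)); first lra.
by move=> i y1 y2 _ ->; lra.
Qed.

Lemma sumI_le N (f g : 'I_N -> R) : (forall i, f i <= g i) -> sumI f <= sumI g.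
Proof.
move=> H; rewrite /sumI; apply: (big_rec2 (fun x y => x <= y)); first lra.
move=> i y1 y2 _ Hy; move: (H i); lra.
Qed.

Lemma sumI_ge0 N (f : 'I_N -> R) : (forall i, 0 <= f i) -> 0 <= sumI f.
Proof.
move=> H; rewrite /sumI; apply: (big_ind (fun x => 0 <= x)); first lra.
  move=> x y; lra.
by move=> i _; apply: H.
Qed.

Lemma sumI_const N c : sumI (fun _ : 'I_N => c) = INR N * c.
Proof.
rewrite /sumI big_const_ord; elim: N => [|n IH] /=; first lra.
rewrite IH; case: n {IH} => [|n] /=; lra.
Qed.

Lemma sumI_single N (f : 'I_N -> R) i : (forall j, j != i -> f j = 0) -> sumI f = f i.
Proof.
move=> H; rewrite /sumI (bigD1 i) //= big1; first lra.
by move=> j Hj; apply: H.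
Qed.

Lemma sumI_ge_term N (f : 'I_N -> R) i : (forall j, 0 <= f j) -> f i <= sumI f.
Proof.
move=> H; rewrite /sumI (bigD1 i) //=.
rewrite -{1}(Rplus_0_r (f i)); apply: Rplus_le_compat_l.
apply: (big_ind (fun x => 0 <= x)); first lra.
  move=> x y; lra.
by move=> j _; apply: H.
Qed.

Lemma sumI_abs N (f : 'I_N -> R) : Rabs (sumI f) <= sumI (fun i => Rabs (f i)).
Proof.
rewrite /sumI; apply: (big_rec2 (fun x y => Rabs x <= y)).
  rewrite Rabs_R0; lra.
move=> i y1 y2 _ Hy; move: (Rabs_triang (f i) y1); lra.
Qed.

Lemma sumI_sub N (f g : 'I_N -> R) : sumI f - sumI g = sumI (fun i => f i - g i).
Proof.
have -> : (fun i => f i - g i) = (fun i => f i + (-1) * g i).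
  by apply: functional_extensionality => i; lra.
rewrite sumI_add sumI_scal; lra.
Qed.

Lemma sumI_zero N (f : 'I_N -> R) : (forall i, f i = 0) -> sumI f = 0.
Proof. by move=> H; rewrite /sumI big1. Qed.

Lemma dot_ge0 N (v : Vec N) : 0 <= dot v v.
Proof. apply: sumI_ge0 => i; apply: Rle_0_sqr. Qed.

Lemma coord_le_norm N (v : Vec N) i : Rabs (v i) <= vnorm v.
Proof.
rewrite /vnorm -sqrt_Rsqr_abs; apply: sqrt_le_1_alt.
rewrite /Rsqr /dot; apply: (@sumI_ge_term _ (fun j => v j * v j) i) => j; apply: Rle_0_sqr.
Qed.

Lemma coord_le_dist N (x y : Vec N) i : Rabs (x i - y i) <= Defs.dist x y.
Proof. exact: (@coord_le_norm N (vsub x y) i). Qed.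

Lemma norm_le_coord N (v : Vec N) d : 0 <= d -> (forall i, Rabs (v i) <= d) ->
  vnorm v <= sqrt (INR N) * d.
Proof.
move=> Hd H; rewrite /vnorm -(sqrt_square d) // -sqrt_mult; last by nra.
  2: exact: pos_INR.
apply: sqrt_le_1_alt; rewrite /dot -sumI_const; apply: sumI_le => i.
move: (H i) (Rabs_pos (v i)) => Hi Hp.
have -> : v i * v i = Rabs (v i) * Rabs (v i).
  by rewrite -Rabs_mult Rabs_pos_eq //; nra.
nra.
Qed.

Lemma dist_le_coord N (x y : Vec N) d : 0 <= d -> (forall i, Rabs (x i - y i) <= d) ->
  Defs.dist x y <= sqrt (INR N) * d.
Proof. by move=> Hd H; apply: norm_le_coord. Qed.

Lemma sqrtN_pos N : (1 <= N)%nat -> 0 < sqrt (INR N).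
Proof.
move=> HN; apply: sqrt_lt_R0; apply: lt_0_INR; apply/ltP; exact: HN.
Qed.

Lemma dist_lt_coord N (x y : Vec N) e : (1 <= N)%nat -> 0 < e ->
  (forall i, Rabs (x i - y i) < e / (2 * sqrt (INR N))) -> Defs.dist x y < e.
Proof.
move=> HN He H; have Hs := sqrtN_pos HN.
have Hd : 0 <= e / (2 * sqrt (INR N)).
  apply: Rlt_le; apply: Rdiv_lt_0_compat; lra.
have := dist_le_coord Hd (fun i => Rlt_le _ _ (H i)).
have -> : sqrt (INR N) * (e / (2 * sqrt (INR N))) = e / 2 by field; lra.
lra.
Qed.

Lemma dist_self N (x : Vec N) : Defs.dist x x = 0.
Proof.
rewrite /Defs.dist /vnorm /dot sumI_zero ?sqrt_0 // => i; rewrite /vsub; lra.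
Qed.



Lemma incr_ge (phi : nat -> nat) : (forall n, (phi n < phi n.+1)%nat) -> forall n, (n <= phi n)%nat.
Proof.
move=> H; elim=> [|n IH] //; apply: leq_ltn_trans IH (H n).
Qed.

Lemma incr_strict (phi : nat -> nat) : (forall n, (phi n < phi n.+1)%nat) ->
  forall n m, (n < m)%nat -> (phi n < phi m)%nat.
Proof.
move=> H n; elim=> [|m IH] //; rewrite ltnS leq_eqVlt => /orP [/eqP ->|Hnm] //.
apply: ltn_trans (IH Hnm) (H m).
Qed.

Lemma Un_cv_subseq (v : nat -> R) l (psi : nat -> nat) :
  Un_cv v l -> (forall n, (n <= psi n)%nat) -> Un_cv (fun n => v (psi n)) l.
Proof.
move=> Hv Hp eps He; have [N0 HN0] := Hv eps He; exists N0 => n Hn.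
apply: HN0; apply/leP; apply: leq_trans (Hp n); by apply/leP.
Qed.

Lemma inv_small eps : 0 < eps -> exists N0 : nat, forall n, (N0 <= n)%nat -> / INR n.+1 < eps.
Proof.
move=> He; have [N0 [H1 H2]] := archimed_cor1 eps He; exists N0 => n Hn.
apply: Rle_lt_trans H1; apply: Rinv_le_contravar; first by apply: lt_0_INR.
apply: le_INR; apply/leP; by apply: leq_trans Hn _.
Qed.

Lemma bw1 (u : nat -> R) B : (forall n, Rabs (u n) <= B) ->
  exists psi l, (forall n, (psi n < psi n.+1)%nat) /\ Un_cv (fun n => u (psi n)) l.
Proof.
move=> HB.
have [l Hl] : exists l, ValAdh u l.
  apply: (@Bolzano_Weierstrass u (fun c => -B <= c <= B) (compact_P3 (-B) B)).
  by move=> n; move: (HB n); rewrite /Rabs; case: Rcase_abs; lra.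
have H : forall n m, exists p, (m < p)%nat /\ Rabs (u p - l) < / INR n.+1.
  move=> n m.
  have Hpos : 0 < / INR n.+1 by apply: Rinv_0_lt_compat; apply: lt_0_INR; apply/ltP.
  have Hnb : neighbourhood (fun x => Rabs (x - l) < / INR n.+1) l.
    by exists (mkposreal _ Hpos) => x Hx.
  have [p [Hp1 Hp2]] := Hl _ m.+1 Hnb.
  by exists p; split => //; apply/leP.
pose g n m := proj1_sig (constructive_indefinite_description _ (H n m)).
have Hg : forall n m, (m < g n m)%nat /\ Rabs (u (g n m) - l) < / INR n.+1.
  by move=> n m; rewrite /g; case: (constructive_indefinite_description _ _).
pose psi := fix psi n := match n with O => g O O | S k => g (S k) (psi k) end.
exists psi, l; split.
  by move=> n; case: (Hg n.+1 (psi n)).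
move=> eps He; have [N0 HN0] := inv_small He; exists N0 => n Hn.
have Hn' : (N0 <= n)%nat by apply/leP.
have Hpsi : forall n, Rabs (u (psi n) - l) < / INR n.+1.
  by case => [|k]; [exact: (proj2 (Hg 0%nat 0%nat)) | exact: (proj2 (Hg k.+1 (psi k)))].
have := HN0 n Hn'; have := Hpsi n; rewrite /Rdist; lra.
Qed.

Lemma bwN N (x : nat -> Vec N) B : (forall n i, Rabs (x n i) <= B) ->
  exists phi L, (forall n, (phi n < phi n.+1)%nat) /\
    forall i, Un_cv (fun n => x (phi n) i) (L i).
Proof.
move=> HB.
suff : forall k, exists phi (L : Vec N), (forall n, (phi n < phi n.+1)%nat) /\
    forall i : 'I_N, (i < k)%nat -> Un_cv (fun n => x (phi n) i) (L i).
  move=> /(_ N) [phi [L [H1 H2]]]; exists phi, L; split => // i; exact: H2.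
elim=> [|k [phi [L [H1 H2]]]].
  by exists (fun n : nat => n), (fun _ => 0); split.
case: (ltnP k N) => Hk; last first.
  exists phi, L; split => // i Hi; apply: H2.
  by rewrite ltnS leq_eqVlt in Hi; case/orP: Hi => // /eqP Hi; move: (ltn_ord i); rewrite Hi ltnNge Hk.
pose i0 := Ordinal Hk.
have [psi [l [Hp1 Hp2]]] := bw1 (fun n => HB (phi n) i0).
exists (fun n => phi (psi n)), (fun j => if j == i0 then l else L j); split.
  by move=> n; apply: incr_strict.
move=> i Hi; case: eqP => [->|Hne] //.
apply: (Un_cv_subseq (v := fun n => x (phi n) i)); last exact: incr_ge.
apply: H2; rewrite ltnS leq_eqVlt in Hi; case/orP: Hi => // /eqP Hi.
by exfalso; apply: Hne; apply: val_inj.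
Qed.

Lemma cv_uniform N (y : nat -> Vec N) (L : Vec N) :
  (forall i, Un_cv (fun n => y n i) (L i)) ->
  forall d, 0 < d -> exists n0, forall n, (n0 <= n)%nat -> forall i, Rabs (y n i - L i) < d.
Proof.
move=> H d Hd.
have H' : forall i, exists n0, forall n, (n0 <= n)%nat -> Rabs (y n i - L i) < d.
  move=> i; have [n0 Hn0] := H i d Hd; exists n0 => n Hn; apply: Hn0; by apply/leP.
pose n0 i := proj1_sig (constructive_indefinite_description _ (H' i)).
have Hn0 : forall i n, (n0 i <= n)%nat -> Rabs (y n i - L i) < d.
  by move=> i; rewrite /n0; case: (constructive_indefinite_description _ (H' i)).
exists (\max_(i < N) n0 i) => n Hn i.
apply: Hn0; apply: leq_trans Hn; exact: (leq_bigmax (F := n0) i).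
Qed.



Definition coord_closed N (K : Vec N -> Prop) : Prop :=
  forall L, (forall d, 0 < d -> exists y, K y /\ forall i, Rabs (y i - L i) < d) -> K L.

Lemma seq_lim N (K : Vec N -> Prop) (f : Vec N -> R) B (xs : nat -> Vec N) :
  (1 <= N)%nat -> (forall x, K x -> forall i, Rabs (x i) <= B) -> coord_closed K ->
  cont_on K f -> (forall n, K (xs n)) ->
  exists phi L, (forall n, (phi n < phi n.+1)%nat) /\ K L /\
    forall e, 0 < e -> exists n0, forall n, (n0 <= n)%nat -> Rabs (f (xs (phi n)) - f L) < e.
Proof.
move=> HN HB Hcl Hf Hxs.
have [phi [L [Hphi HL]]] := bwN (fun n i => HB _ (Hxs n) i).
have HU := cv_uniform HL.
have KL : K L.
  apply: Hcl => d Hd; have [n0 Hn0] := HU d Hd.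
  by exists (xs (phi n0)); split => //; apply: Hn0.
exists phi, L; split => //; split => // e He.
have [del [Hdel Hc]] := Hf L KL e He.
have Hd' : 0 < del / (2 * sqrt (INR N)).
  apply: Rdiv_lt_0_compat => //; have := sqrtN_pos HN; lra.
have [n0 Hn0] := HU _ Hd'; exists n0 => n Hn.
apply: Hc => //; apply: dist_lt_coord => //; exact: Hn0.
Qed.

Lemma nat_large (c : R) n0 : exists n, (n0 <= n)%nat /\ c < INR n.
Proof.
have [m Hm] := INR_unbounded c; exists (maxn n0 m); split; first exact: leq_maxl.
apply: Rlt_le_trans Hm _; apply: le_INR; apply/leP; exact: leq_maxr.
Qed.

Lemma attain_max N (K : Vec N -> Prop) (f : Vec N -> R) B x0 :
  (1 <= N)%nat -> (forall x, K x -> forall i, Rabs (x i) <= B) -> coord_closed K ->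
  cont_on K f -> K x0 -> exists x1, K x1 /\ forall x, K x -> f x <= f x1.
Proof.
move=> HN HB Hcl Hf Hx0.
have [M HM] : exists M, forall x, K x -> f x <= M.
  apply: NNPP => Hno.
  have Hs : forall n : nat, exists x, K x /\ INR n < f x.
    move=> n; apply: NNPP => Hn; apply: Hno; exists (INR n) => x Kx.
    apply: Rnot_lt_le => Hlt; apply: Hn; by exists x.
  pose xs n := proj1_sig (constructive_indefinite_description _ (Hs n)).
  have Hxs : forall n, K (xs n) /\ INR n < f (xs n).
    by move=> n; rewrite /xs; case: (constructive_indefinite_description _ _).
  have [phi [L [Hphi [KL Hc]]]] := seq_lim HN HB Hcl Hf (fun n => proj1 (Hxs n)).
  have [n0 Hn0] := Hc 1 Rlt_0_1.
  have [n [Hn Hn']] := nat_large (f L + 1) n0.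
  have := Hn0 n Hn; have := proj2 (Hxs (phi n)).
  have : INR n <= INR (phi n) by apply: le_INR; apply/leP; exact: incr_ge.
  move: (Rle_abs (f (xs (phi n)) - f L)); lra.
pose E r := exists x, K x /\ r = f x.
have HbE : bound E.
  by exists M => r [x [Kx ->]]; apply: HM.
have HneE : exists r, E r by exists (f x0), x0.
have [m [Hub Hlub]] := completeness E HbE HneE.
have Hs : forall n : nat, exists x, K x /\ m - / INR n.+1 < f x.
  move=> n; apply: NNPP => Hn.
  have : m <= m - / INR n.+1.
    apply: Hlub => r [x [Kx ->]]; apply: Rnot_lt_le => Hlt; apply: Hn; by exists x.
  have : 0 < / INR n.+1 by apply: Rinv_0_lt_compat; apply: lt_0_INR; apply/ltP.
  lra.
pose xs n := proj1_sig (constructive_indefinite_description _ (Hs n)).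
have Hxs : forall n, K (xs n) /\ m - / INR n.+1 < f (xs n).
  by move=> n; rewrite /xs; case: (constructive_indefinite_description _ _).
have [phi [L [Hphi [KL Hc]]]] := seq_lim HN HB Hcl Hf (fun n => proj1 (Hxs n)).
exists L; split => // x Kx.
have HLm : f L <= m by apply: Hub; exists L.
suff : m <= f L by have := Hub (f x) (ex_intro _ x (conj Kx erefl)); lra.
apply: Rnot_lt_le => Hlt.
have He : 0 < (m - f L) / 2 by lra.
have [n0 Hn0] := Hc _ He.
have [n1 Hn1] := inv_small He.
have Hn := Hn0 (maxn n0 n1) (leq_maxl _ _).
have Hi := Hn1 (phi (maxn n0 n1)) (leq_trans (leq_maxr n0 n1) (incr_ge Hphi _)).
have := proj2 (Hxs (phi (maxn n0 n1))).
move: (Rle_abs (f (xs (phi (maxn n0 n1))) - f L)) (Rle_abs (- (f (xs (phi (maxn n0 n1))) - f L))).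
rewrite Rabs_Ropp; lra.
Qed.



Lemma fin_max N (h : 'I_N -> R) c : (forall i, h i < c) -> exists m, m < c /\ forall i, h i <= m.
Proof.
move=> H.
suff : forall s : seq 'I_N, exists m, m < c /\ forall i, i \in s -> h i <= m.
  move=> /(_ (enum 'I_N)) [m [Hm1 Hm2]]; exists m; split => // i.
  by apply: Hm2; rewrite mem_enum.
elim=> [|j s [m [Hm1 Hm2]]].
  by exists (c - 1); split; [lra|].
exists (Rmax (h j) m); split.
  by apply: Rmax_lub_lt.
move=> i; rewrite in_cons => /orP [/eqP ->|Hi]; first exact: Rmax_l.
apply: Rle_trans (Hm2 i Hi) _; exact: Rmax_r.
Qed.

Definition box N (y : Vec N) (rho : R) : Vec N -> Prop :=
  fun w => forall i, Rabs (w i - y i) < rho.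

Lemma box_open N (y : Vec N) rho : Defs.open_set (box y rho).
Proof.
move=> w Hw; have [m [Hm1 Hm2]] := fin_max Hw.
exists (rho - m); split; first lra.
move=> v Hv i; have := coord_le_dist v w i; have := Hm2 i.
have := Rabs_triang (v i - w i) (w i - y i).
have -> : v i - w i + (w i - y i) = v i - y i by ring.
lra.
Qed.

Lemma abs_comb a b t : 0 <= t <= 1 -> Rabs ((1 - t) * a + t * b) <= (1 - t) * Rabs a + t * Rabs b.
Proof.
move=> Ht; apply: Rle_trans (Rabs_triang _ _) _.
rewrite !Rabs_mult (Rabs_pos_eq t) ?(Rabs_pos_eq (1 - t)); lra.
Qed.

Lemma box_connected N (y : Vec N) rho : (1 <= N)%nat -> connected_set (box y rho).
Proof.
move=> HN A B HA HB Hcov Hdis [a [Ha HaA]] [b [Hb HbB]].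
pose p t : Vec N := fun i => a i + t * (b i - a i).
have Hpbox : forall t, 0 <= t <= 1 -> box y rho (p t).
  move=> t Ht i; rewrite /p.
  have -> : a i + t * (b i - a i) - y i = (1 - t) * (a i - y i) + t * (b i - y i) by ring.
  apply: Rle_lt_trans (abs_comb _ _ Ht) _.
  have := Ha i; have := Hb i; case: (Rlt_le_dec t 1) => Ht1; nra.
have Hp0 : p 0 = a by apply: functional_extensionality => i; rewrite /p; ring.
have Hp1 : p 1 = b by apply: functional_extensionality => i; rewrite /p; ring.
pose i0 : 'I_N := Ordinal HN.
have Hrho : 0 < rho by have := Ha i0; have := Rabs_pos (a i0 - y i0); lra.
have Hsq := sqrtN_pos HN.
have Hcont : forall r, 0 < r -> exists eta, 0 < eta /\
    forall s t, Rabs (s - t) < eta -> Defs.dist (p s) (p t) < r.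
  move=> r Hr; pose r' := r / (2 * sqrt (INR N)).
  have Hr' : 0 < r' by apply: Rdiv_lt_0_compat; lra.
  exists (r' / (2 * rho + 1)); split; first by apply: Rdiv_lt_0_compat; lra.
  move=> s t Hst; apply: dist_lt_coord => // i; rewrite /p.
  have -> : a i + s * (b i - a i) - (a i + t * (b i - a i)) = (s - t) * (b i - a i) by ring.
  rewrite Rabs_mult.
  have Hba : Rabs (b i - a i) <= 2 * rho.
    have := Rabs_triang (b i - y i) (y i - a i).
    have -> : b i - y i + (y i - a i) = b i - a i by ring.
    have := Hb i; have := Ha i; rewrite -(Rabs_Ropp (a i - y i)).
    have -> : - (a i - y i) = y i - a i by ring.
    lra.
  have Hst' : Rabs (s - t) * (2 * rho + 1) < r'.
    have := Rmult_lt_compat_r (2 * rho + 1) _ _ (ltac:(lra) : 0 < 2 * rho + 1) Hst.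
    have -> : r' / (2 * rho + 1) * (2 * rho + 1) = r' by field; lra.
    done.
  have := Rmult_le_compat_l (Rabs (s - t)) _ _ (Rabs_pos _) Hba.
  have := Rabs_pos (s - t); rewrite -/r'; nra.
pose S t := 0 <= t <= 1 /\ forall s, 0 <= s <= t -> A (p s).
have HbS : bound S by exists 1 => t [Ht _]; lra.
have HS0' : S 0.
  split; first lra.
  move=> s Hs; have Hs0 : s = 0 by lra.
  by rewrite Hs0 Hp0.
have HS0 : exists t, S t by exists 0.
have [s0 [Hub Hlub]] := completeness S HbS HS0.
have Hs00 : 0 <= s0 by apply: Hub.
have Hs01 : s0 <= 1 by apply: Hlub => t [Ht _]; lra.
have Hbelow : forall s, 0 <= s < s0 -> A (p s).
  move=> s Hs; apply: NNPP => Hn.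
  have : s0 <= s; last lra.
  apply: Hlub => t [Ht1 Ht2]; apply: Rnot_lt_le => Hts; apply: Hn; apply: Ht2; lra.
case: (Hcov _ (Hpbox s0 (conj Hs00 Hs01))) => Hs0AB.
- have [r [Hr HrA]] := HA _ Hs0AB.
  have [eta [Heta Heta2]] := Hcont r Hr.
  case: (Req_dec s0 1) => Hs1.
    exfalso; apply: (Hdis b Hb); last exact: HbB.
    by rewrite -Hp1 -Hs1.
  pose t := Rmin 1 (s0 + eta / 2).
  have Ht1 : s0 < t by rewrite /t /Rmin; case: Rle_dec; lra.
  have Ht2 : t <= 1 by rewrite /t /Rmin; case: Rle_dec; lra.
  have Ht3 : t <= s0 + eta / 2 by rewrite /t /Rmin; case: Rle_dec; lra.
  have : t <= s0; last lra.
  apply: Hub; split; first lra.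
  move=> s Hs; case: (Rlt_le_dec s s0) => Hss; first by apply: Hbelow; lra.
  apply: HrA; apply: Heta2; rewrite Rabs_pos_eq; lra.
- have [r [Hr HrB]] := HB _ Hs0AB.
  have [eta [Heta Heta2]] := Hcont r Hr.
  case: (Req_dec s0 0) => Hs0.
    exfalso; apply: (Hdis a Ha) => //; by rewrite -Hp0 -Hs0.
  pose s := Rmax (s0 / 2) (s0 - eta / 2).
  have Hs1 : s < s0 by rewrite /s /Rmax; case: Rle_dec; lra.
  have Hs2 : 0 <= s by rewrite /s /Rmax; case: Rle_dec; lra.
  have Hs3 : s0 - eta / 2 <= s by rewrite /s /Rmax; case: Rle_dec; lra.
  apply: (Hdis (p s)); first by apply: Hpbox; lra.
    by apply: Hbelow; lra.
  apply: HrB; apply: Heta2; rewrite Rabs_left; lra.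
Qed.



Definition smat N (c : R) : Mat N := fun i j => if i == j then c else 0.

Lemma matvec_smat N c (v : Vec N) i : matvec (smat c) v i = c * v i.
Proof.
rewrite /matvec (@sumI_single _ _ i) /smat ?eqxx //.
by move=> j Hj; rewrite eq_sym (negbTE Hj); ring.
Qed.

Lemma eig_smat N c k : eig (smat (N:=N) c) k = c.
Proof.
have Hex : eigvals_of (smat (N:=N) c) (fun _ => c).
  exists (fun k => evec k); split.
    move=> k' l; rewrite /dot (@sumI_single _ _ k') /evec ?eqxx; first by case: (k' == l); ring.
    by move=> j Hj; rewrite (negbTE Hj); ring.
  by move=> k' i; rewrite matvec_smat.
have := epsilon_spec (inhabits (fun _ : 'I_N => 0)) (eigvals_of (smat (N:=N) c)) (ex_intro _ _ Hex).
rewrite -/(eig (smat c)) => [[v [Hon Hev]]].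
apply: NNPP => Hne.
have Hz : forall i, v k i = 0.
  move=> i; have := Hev k i; rewrite matvec_smat => H.
  have : (c - eig (smat c) k) * v k i = 0 by lra.
  case/Rmult_integral => // H'; exfalso; apply: Hne; lra.
have := Hon k k; rewrite eqxx /dot sumI_zero; first lra.
by move=> i; rewrite Hz; ring.
Qed.

Lemma F_zero N (Om : Vec N -> Prop) F x : F2 Om F -> Om x -> F x (fun _ _ => 0) = 0.
Proof.
move=> HF2 Hx.
have := HF2 x (fun _ _ => 0) 2 Hx (fun _ _ => erefl) ltac:(lra).
have -> : mscale 2 (fun _ _ : 'I_N => 0) = (fun _ _ => 0).
  by apply: functional_extensionality => i; apply: functional_extensionality => j; rewrite /mscale; ring.
lra.
Qed.

Lemma smat_sym N c : Sym (smat (N:=N) c).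
Proof. by move=> i j; rewrite /smat eq_sym. Qed.

Lemma F_neg N (Om : Vec N -> Prop) F lam Lam x c : (1 <= N)%nat ->
  F1 Om F lam Lam -> F2 Om F -> Om x -> 0 < c -> F x (smat (-c)) < 0.
Proof.
move=> HN [Hl [HlL HF1]] HF2 Hx Hc.
have Hpsd : psd (smat (N:=N) c).
  move=> v; rewrite /dot; apply: sumI_ge0 => i; rewrite matvec_smat.
  have := Rle_0_sqr (v i); rewrite /Rsqr; nra.
have [H1 _] := HF1 x (smat (-c)) (smat c) Hx (smat_sym _) (smat_sym _) Hpsd.
have Em : madd (smat (N:=N) (-c)) (smat c) = (fun _ _ => 0).
  apply: functional_extensionality => i; apply: functional_extensionality => j.
  by rewrite /madd /smat; case: (i == j); ring.
rewrite Em in H1.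
rewrite (F_zero HF2 Hx) in H1.
move: H1; rewrite /Pucci_minus.
have -> : (fun i => Rmax (eig (smat (N:=N) c) i) 0) = (fun _ => c).
  apply: functional_extensionality => i; rewrite eig_smat Rmax_left //; lra.
have -> : (fun i => Rmin (eig (smat (N:=N) c) i) 0) = (fun _ => 0).
  apply: functional_extensionality => i; rewrite eig_smat Rmin_right //; lra.
rewrite !sumI_const.
have : 0 < INR N by apply: lt_0_INR; apply/ltP.
move=> HNp H1.
have : 0 < lam * (INR N * c) by apply: Rmult_lt_0_compat => //; nra.
lra.
Qed.

Definition gq N (z x : Vec N) : R := dot (vsub x z) (vsub x z).

Lemma gq_cont N (z : Vec N) U : (1 <= N)%nat -> cont_on U (gq z).
Proof.
move=> HN x _ eps He.
set D := vnorm (vsub x z).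
have HD : 0 <= D by apply: sqrt_pos.
have HNp : 0 < INR N by apply: lt_0_INR; apply/ltP.
set K := INR N * (1 + 2 * D).
have HK : 0 <= K by rewrite /K; nra.
exists (Rmin 1 (eps / (K + 1))); split.
  apply: Rmin_glb_lt; first lra; apply: Rdiv_lt_0_compat; lra.
move=> y _ Hy; set d := Rmin 1 (eps / (K + 1)).
have Hd1 : d <= 1 by apply: Rmin_l.
have Hd2 : d <= eps / (K + 1) by apply: Rmin_r.
rewrite /gq /dot sumI_sub; apply: Rle_lt_trans (sumI_abs _) _.
apply: (@Rle_lt_trans _ (sumI (fun _ : 'I_N => d * (1 + 2 * D)))).
  apply: sumI_le => i; rewrite /vsub.
  have -> : (y i - z i) * (y i - z i) - (x i - z i) * (x i - z i)
        = (y i - x i) * ((y i - x i) + 2 * (x i - z i)) by ring.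
  rewrite Rabs_mult.
  have H1 : Rabs (y i - x i) < d by apply: Rle_lt_trans (coord_le_dist y x i) Hy.
  have H2 : Rabs (x i - z i) <= D by apply: (coord_le_norm (vsub x z) i).
  have H3 : Rabs (y i - x i + 2 * (x i - z i)) <= 1 + 2 * D.
    apply: Rle_trans (Rabs_triang _ _) _; rewrite Rabs_mult (Rabs_pos_eq 2); lra.
  apply: Rmult_le_compat; try lra; exact: Rabs_pos.
rewrite sumI_const.
have Hdp : 0 <= d by apply: Rmin_glb; [lra | apply: Rlt_le; apply: Rdiv_lt_0_compat; lra].
have : d * (K + 1) <= eps.
  have -> : eps = eps / (K + 1) * (K + 1) by field; lra.
  apply: Rmult_le_compat_r; lra.
rewrite /K => H.
have Hdq : 0 < d by apply: Rmin_glb_lt; [lra | apply: Rdiv_lt_0_compat; lra].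
have -> : INR N * (d * (1 + 2 * D)) = d * (INR N * (1 + 2 * D) + 1) - d by ring.
lra.
Qed.



Lemma deriv_quad c a b : derivable_pt_lim (fun t => c + a * t + b * (t * t)) 0 a.
Proof.
move=> eps He.
have Hp : 0 < eps / (Rabs b + 1) by apply: Rdiv_lt_0_compat; have := Rabs_pos b; lra.
exists (mkposreal _ Hp) => h Hh Hhd /=.
have -> : (c + a * (0 + h) + b * ((0 + h) * (0 + h)) - (c + a * 0 + b * (0 * 0))) / h - a = b * h.
  by field.
rewrite Rabs_mult.
have Hb := Rabs_pos b; have Hh' := Rabs_pos h.
have : Rabs h * (Rabs b + 1) < eps.
  have -> : eps = eps / (Rabs b + 1) * (Rabs b + 1) by field; lra.
  apply: Rmult_lt_compat_r => //; lra.
nra.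
Qed.

Lemma gq_shift N (z x : Vec N) i t :
  gq z (vadd x (vscale t (evec i))) = gq z x + 2 * (x i - z i) * t + t * t.
Proof.
rewrite /gq /dot.
have -> : (fun j => vsub (vadd x (vscale t (evec i))) z j * vsub (vadd x (vscale t (evec i))) z j)
   = (fun j => vsub x z j * vsub x z j + (if j == i then 2 * (x j - z j) * t + t * t else 0)).
  apply: functional_extensionality => j; rewrite /vsub /vadd /vscale /evec.
  by case: (j == i); ring.
rewrite sumI_add (@sumI_single _ (fun j => if j == i then _ else 0) i) ?eqxx; first ring.
by move=> j Hj; rewrite (negbTE Hj).
Qed.

Lemma C2_test N (Om : Vec N -> Prop) (z : Vec N) e0 : (1 <= N)%nat ->
  C2_with Om (fun x => - e0 * gq z x) (fun x i => -2 * e0 * (x i - z i))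
    (fun _ => smat (-2 * e0)).
Proof.
move=> HN; split; [|split; [|split; [|split]]].
- move=> x Hx eps He.
  have Hp : 0 < eps / (Rabs e0 + 1) by apply: Rdiv_lt_0_compat; have := Rabs_pos e0; lra.
  have [del [Hdel Hc]] := @gq_cont N z Om HN x Hx _ Hp.
  exists del; split => // y Hy Hd.
  have -> : - e0 * gq z y - - e0 * gq z x = - e0 * (gq z y - gq z x) by ring.
  rewrite Rabs_mult Rabs_Ropp.
  have := Hc y Hy Hd; have := Rabs_pos e0; have := Rabs_pos (gq z y - gq z x).
  have : eps / (Rabs e0 + 1) * (Rabs e0 + 1) = eps by field; have := Rabs_pos e0; lra.
  nra.
- move=> i x Hx; rewrite /partial_at.
  have -> : (fun t => - e0 * gq z (vadd x (vscale t (evec i))))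
     = (fun t => - e0 * gq z x + (-2 * e0 * (x i - z i)) * t + (- e0) * (t * t)).
    by apply: functional_extensionality => t; rewrite gq_shift; ring.
  exact: deriv_quad.
- move=> i x Hx eps He.
  have Hp : 0 < eps / (2 * Rabs e0 + 1) by apply: Rdiv_lt_0_compat; have := Rabs_pos e0; lra.
  exists (eps / (2 * Rabs e0 + 1)); split => // y Hy Hd.
  have -> : -2 * e0 * (y i - z i) - -2 * e0 * (x i - z i) = (-2 * e0) * (y i - x i) by ring.
  rewrite Rabs_mult.
  have Hyx : Rabs (y i - x i) < eps / (2 * Rabs e0 + 1).
    exact: Rle_lt_trans (coord_le_dist y x i) Hd.
  have -> : Rabs (-2 * e0) = 2 * Rabs e0.
    have H2 : Rabs (-2) = 2 by rewrite /Rabs; case: Rcase_abs; lra.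
    by rewrite Rabs_mult H2.
  have : eps / (2 * Rabs e0 + 1) * (2 * Rabs e0 + 1) = eps by field; have := Rabs_pos e0; lra.
  have := Rabs_pos e0; have := Rabs_pos (y i - x i); nra.
- move=> i j x Hx; rewrite /partial_at.
  have -> : (fun t => -2 * e0 * (vadd x (vscale t (evec j)) i - z i))
     = (fun t => -2 * e0 * (x i - z i) + smat (-2 * e0) i j * t + 0 * (t * t)).
    apply: functional_extensionality => t; rewrite /vadd /vscale /evec /smat.
    by case: (i == j); ring.
  exact: deriv_quad.
- move=> i j x Hx eps He; exists 1; split; first lra.
  move=> y _ _; rewrite Rminus_diag Rabs_R0; lra.
Qed.

Lemma rpow_pos t g : 0 < t -> 0 < rpow t g.
Proof. move=> Ht; rewrite /rpow; case: Rlt_dec => H0; [exact: exp_pos | lra]. Qed.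

Lemma rpow_ge0 t g : 0 <= rpow t g.
Proof.
rewrite /rpow; case: Rlt_dec => H0; first by apply: Rlt_le; apply: exp_pos.
destruct (Req_EM_T g 0); simpl; lra.
Qed.

Lemma rpow_zero g : 0 < g -> rpow 0 g = 0.
Proof.
move=> Hg; rewrite /rpow; case: Rlt_dec => H; first lra.
destruct (Req_EM_T g 0); simpl; lra.
Qed.



Lemma cont_on_lin N (U : Vec N -> Prop) f g c : cont_on U f -> cont_on U g -> 0 <= c ->
  cont_on U (fun x => f x + c * g x).
Proof.
move=> Hf Hg Hc x Hx eps He.
have [d1 [Hd1 H1]] := Hf x Hx (eps / 2) ltac:(lra).
have Hp : 0 < eps / (2 * (c + 1)) by apply: Rdiv_lt_0_compat; lra.
have [d2 [Hd2 H2]] := Hg x Hx _ Hp.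
exists (Rmin d1 d2); split; first by apply: Rmin_glb_lt.
move=> y Hy Hd.
have Ha := H1 y Hy (Rlt_le_trans _ _ _ Hd (Rmin_l _ _)).
have Hb := H2 y Hy (Rlt_le_trans _ _ _ Hd (Rmin_r _ _)).
have -> : f y + c * g y - (f x + c * g x) = (f y - f x) + c * (g y - g x) by ring.
apply: Rle_lt_trans (Rabs_triang _ _) _.
rewrite Rabs_mult (Rabs_pos_eq c) //.
have : c * Rabs (g y - g x) <= (c + 1) * Rabs (g y - g x).
  have := Rabs_pos (g y - g x); nra.
have : (c + 1) * (eps / (2 * (c + 1))) = eps / 2 by field; lra.
have := Rabs_pos (g y - g x); nra.
Qed.

Lemma sq_le_of_abs v c : Rabs v <= c -> v * v <= c * c.
Proof.
move=> H; have Hp := Rabs_pos v.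
have -> : v * v = Rabs v * Rabs v by rewrite -Rabs_mult Rabs_pos_eq //; nra.
nra.
Qed.

Unset Implicit Arguments.
Theorem mainTheorem7 (N : nat) (Om : Vec N -> Prop) (gamma q lam Lam : R)
    (a : Vec N -> R) (F : Vec N -> Mat N -> R) (u : Vec N -> R) :
  (1 <= N)%nat ->
  bounded_smooth_domain Om ->
  0 <= gamma -> 0 < q -> q < gamma + 1 ->
  cont_on (closure Om) a ->
  F_cont Om F -> F1 Om F lam Lam -> F2 Om F ->
  solves_P Om F a gamma q u ->
  (exists x, closure Om x /\ u x <> 0) ->
  exists Om' : Vec N -> Prop,
    domain Om' /\
    (forall x, Om' x -> Om x /\ 0 < a x) /\
    (forall x, Om' x -> 0 < u x).
Proof.
move=> HN [[HOpen _] [[M HM] _]] Hg Hq Hqg Ha HFc HF1 HF2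
  [Hucont [Hupos [Hubd [_ [_ Hsub]]]]] [x0 [Hx0c Hx0]].
have Hcl_of : forall x, Om x -> closure Om x.
  by move=> x Hx eps He; exists x; split => //; rewrite dist_self.
have Ox0 : Om x0.
  apply: NNPP => Hn; apply: Hx0; apply: Hubd; by split.
have ux0 : 0 < u x0 by have := Hupos x0 Ox0; lra.
have Hsq := sqrtN_pos HN.
case: (classic (exists y, Om y /\ 0 < u y /\ 0 < a y)) => [[y [Oy [uy ay]]] | Hno].
- have [r1 [Hr1 Hr1O]] := HOpen y Oy.
  have [d2 [Hd2 Hc2]] := Hucont y (Hcl_of y Oy) (u y) uy.
  have [d3 [Hd3 Hc3]] := Ha y (Hcl_of y Oy) (a y) ay.
  set r := Rmin r1 (Rmin d2 d3).
  have Hr : 0 < r by apply: Rmin_glb_lt => //; apply: Rmin_glb_lt.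
  have Hrho : 0 < r / (2 * sqrt (INR N)) by apply: Rdiv_lt_0_compat; lra.
  have Hdist : forall w, box y (r / (2 * sqrt (INR N))) w -> Defs.dist w y < r.
    by move=> w Hw; apply: dist_lt_coord.
  have Hr1' : r <= r1 by apply: Rmin_l.
  have Hd2' : r <= d2 by apply: Rle_trans (Rmin_r _ _) (Rmin_l _ _).
  have Hd3' : r <= d3 by apply: Rle_trans (Rmin_r _ _) (Rmin_r _ _).
  have HOw : forall w, box y (r / (2 * sqrt (INR N))) w -> Om w.
    move=> w Hw; apply: Hr1O; have := Hdist w Hw; lra.
  exists (box y (r / (2 * sqrt (INR N)))); split; [|split].
  + split; first exact: box_open.
    split; first exact: box_connected.
    by exists y => i; rewrite Rminus_diag Rabs_R0.
  + move=> w Hw; split; first exact: HOw.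
    have := Hc3 w (Hcl_of w (HOw w Hw)) ltac:(have := Hdist w Hw; lra).
    move: (Rle_abs (a w - a y)) (Rle_abs (- (a w - a y))); rewrite Rabs_Ropp; lra.
  + move=> w Hw.
    have := Hc2 w (Hcl_of w (HOw w Hw)) ltac:(have := Hdist w Hw; lra).
    move: (Rle_abs (u w - u y)) (Rle_abs (- (u w - u y))); rewrite Rabs_Ropp; lra.
- exfalso.
  have Hno' : forall y, Om y -> 0 < u y -> a y <= 0.
    move=> y Oy uy; apply: Rnot_lt_le => ay; apply: Hno; by exists y.
  set B := Rabs M + 1.
  have HB : forall x, closure Om x -> forall i, Rabs (x i) <= B.
    move=> x Hx i; have [w [Ow Hw]] := Hx 1 Rlt_0_1.
    have H1 := coord_le_norm w i; have H2 := HM w Ow; have H3 := coord_le_dist w x i.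
    have := Rabs_triang (w i) (x i - w i).
    have -> : w i + (x i - w i) = x i by ring.
    rewrite -(Rabs_Ropp (x i - w i)).
    have -> : - (x i - w i) = w i - x i by ring.
    have := Rle_abs M; rewrite /B; lra.
  have HBp : 0 < B by have := Rabs_pos M; rewrite /B; lra.
  pose i0 : 'I_N := Ordinal HN.
  pose z : Vec N := fun i => if i == i0 then B + 1 else 0.
  set Cg := INR N * ((2 * B + 1) * (2 * B + 1)).
  have HNp : 0 < INR N by apply: lt_0_INR; apply/ltP.
  have HCg : 0 < Cg by rewrite /Cg; apply: Rmult_lt_0_compat => //; nra.
  have Hgb : forall x, closure Om x -> gq z x <= Cg.
    move=> x Hx; rewrite /gq /dot /Cg -sumI_const; apply: sumI_le => i.
    apply: sq_le_of_abs; rewrite /vsub.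
    have Hz : Rabs (z i) <= B + 1.
      rewrite /z; case: (i == i0); rewrite ?Rabs_R0 ?Rabs_pos_eq; lra.
    apply: Rle_trans (Rabs_triang (x i) (- z i)) _; rewrite Rabs_Ropp.
    have := HB x Hx i; lra.
  set e0 := u x0 / (2 * Cg).
  have He0 : 0 < e0 by apply: Rdiv_lt_0_compat; lra.
  have He0C : e0 * Cg = u x0 / 2 by rewrite /e0; field; lra.
  have Hfc : cont_on (closure Om) (fun x => u x + e0 * gq z x).
    apply: cont_on_lin => //; [exact: gq_cont | lra].
  have Hclosed : coord_closed (closure Om).
    move=> L HL eps He.
    have Hd : 0 < eps / (2 * sqrt (INR N)) / 2.
      apply: Rdiv_lt_0_compat; [apply: Rdiv_lt_0_compat|]; lra.
    have [y [Hy Hy2]] := HL _ Hd.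
    have [w [Ow Hw]] := Hy _ Hd.
    exists w; split => //; apply: dist_lt_coord => // i.
    have := Rabs_triang (w i - y i) (y i - L i).
    have -> : w i - y i + (y i - L i) = w i - L i by ring.
    have := Hy2 i; have := coord_le_dist w y i; lra.
  have [x1 [Kx1 Hmax]] := attain_max HN HB Hclosed Hfc (Hcl_of x0 Ox0).
  have Hg0 : forall x, 0 <= gq z x by move=> x; apply: dot_ge0.
  have Ox1 : Om x1.
    apply: NNPP => Hn.
    have Hu1 : u x1 = 0 by apply: Hubd; split.
    have := Hmax x0 (Hcl_of x0 Ox0); rewrite Hu1.
    have := Hgb x1 Kx1; have := Hg0 x0.
    have : e0 * gq z x1 <= e0 * Cg by apply: Rmult_le_compat_l; [lra | exact: Hgb].
    have : 0 <= e0 * gq z x0 by apply: Rmult_le_pos; [lra | apply: Hg0].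
    lra.
  have Hloc : local_max_on Om (fun x => u x - (- e0 * gq z x)) x1.
    exists 1; split; first lra.
    move=> y Oy _; have := Hmax y (Hcl_of y Oy); lra.
  have := Hsub _ _ _ x1 (C2_test Om z e0 HN) Ox1 Hloc.
  rewrite /G_aq.
  have Em : smat (N:=N) (-2 * e0) = smat (- (2 * e0)) by f_equal; ring.
  rewrite Em.
  have HF := F_neg HN HF1 HF2 Ox1 (ltac:(lra) : 0 < 2 * e0).
  have Hx1i0 := HB x1 Kx1 i0.
  have Hv : 0 < vnorm (fun i => -2 * e0 * (x1 i - z i)).
    apply: sqrt_lt_R0.
    apply: Rlt_le_trans
      (@sumI_ge_term _ (fun i => (-2 * e0 * (x1 i - z i)) * (-2 * e0 * (x1 i - z i))) i0 _).
      rewrite /z eqxx.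
      have : x1 i0 - (B + 1) < 0 by move: (Rle_abs (x1 i0)); lra.
      move=> Hneg; have : 0 < -2 * e0 * (x1 i0 - (B + 1)) by nra.
      nra.
    move=> j; apply: Rle_0_sqr.
  have Hr := rpow_pos gamma Hv.
  have H1 : rpow (vnorm (fun i => -2 * e0 * (x1 i - z i))) gamma * F x1 (smat (- (2 * e0))) < 0.
    nra.
  have H2 : a x1 * rpow (u x1) q <= 0.
    case: (Rlt_le_dec 0 (u x1)) => Hu.
      have := Hno' x1 Ox1 Hu; have := rpow_ge0 (u x1) q; nra.
    have -> : u x1 = 0 by have := Hupos x1 Ox1; lra.
    rewrite rpow_zero //; lra.
  lra.
Qed.
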